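(* Let $0<q<1/2$, $p=1-q$, and for integers $z\ge1$ let $$P_{SN}(z)=1-\sum_{k=0}^{z-1}e^{-zq/p}\frac{(zq/p)^k}{k!}\left(1-\left(\frac qp\right)^{z-k}\right).$$ Then for every integer $z\ge1$, $$P_{SN}(z)<\frac{1}{1-\frac qp}\frac{1}{\sqrt{2\pi z}}e^{-\left(\frac qp-1-\log\frac qp\right)z}+\frac12e^{-\left(\frac qp-1-\log\frac qp\right)z}.$$
   Context: $P_{SN}(z)$ is Nakamoto's approximation of the probability of success of a double-spend attack after $z$ confirmations. *)

(* Defs.v *)
From Stdlib Require Import Reals Lra Lia Factorial.
Open Scope R_scope.

(* Nakamoto's approximation P_SN(z), with p = 1 - q, lambda = z q / p:
   P_SN(z) = 1 - sum_{k=0}^{z-1} e^{-lambda} lambda^k / k! (1 - (q/p)^{z-k}).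
   sum_f_R0 f n sums f 0 + ... + f n, so we use n = z - 1 (z >= 1). *)
Definition P_SN (q : R) (z : nat) : R :=
  let p := 1 - q in
  let lam := INR z * q / p in
  1 - sum_f_R0 (fun k => exp (- lam) * lam ^ k / INR (fact k)
                          * (1 - (q / p) ^ (z - k))) (z - 1).

(* Main.v *)
Require Import Defs.
From Stdlib Require Import Reals Lra Lia Factorial.
From Coquelicot Require Import Coquelicot.
Open Scope R_scope.


Lemma mono_le (f df : R -> R) a b : a <= b ->
  (forall x, a <= x <= b -> is_derive f x (df x)) ->
  (forall x, a < x < b -> 0 <= df x) -> f a <= f b.
Proof.
  intros Hab Hd Hp. destruct (Req_dec a b) as [->|Hne]; [lra|].
  destruct (MVT_cor2 f df a b) as [c [Hc1 Hc2]]; [lra| |].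
  - intros c Hc. apply is_derive_Reals. apply Hd. exact Hc.
  - assert (0 <= df c) by (apply Hp; lra). nra.
Qed.

Lemma mono_lt (f df : R -> R) a b : a < b ->
  (forall x, a <= x <= b -> is_derive f x (df x)) ->
  (forall x, a < x < b -> 0 < df x) -> f a < f b.
Proof.
  intros Hab Hd Hp.
  destruct (MVT_cor2 f df a b) as [c [Hc1 Hc2]]; [lra| |].
  - intros c Hc. apply is_derive_Reals. apply Hd. exact Hc.
  - assert (0 < df c) by (apply Hp; lra). nra.
Qed.

Lemma exp_mult_INR n x : exp (INR n * x) = exp x ^ n.
Proof.
  induction n as [|n IH]. simpl. rewrite Rmult_0_l. apply exp_0.
  rewrite S_INR. replace ((INR n + 1) * x) with (x + INR n * x) by ring.
  rewrite exp_plus, IH. simpl. ring.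
Qed.

Fixpoint Ssum (n : nat) (x : R) : R :=
  match n with O => 0 | S m => Ssum m x + x ^ m / INR (fact m) end.

Lemma fact_pos' n : 0 < INR (fact n).
Proof. apply lt_0_INR. apply lt_O_fact. Qed.

Lemma is_derive_Ssum m (x : R) : is_derive (Ssum (S m)) x (Ssum m x).
Proof.
  induction m as [|m IH].
  - simpl. apply is_derive_ext with (f := fun _ => 0 + 1 / 1).
    intros t. reflexivity. auto_derive. auto. ring.
  - apply is_derive_ext with (f := fun t => Ssum (S m) t + t ^ (S m) / INR (fact (S m))).
    intros t. reflexivity.
    replace (Ssum (S m) x) with (Ssum m x + INR (S m) * x ^ m / INR (fact (S m))).
    apply is_derive_Reals; apply derivable_pt_lim_plus; apply is_derive_Reals. exact IH.
    assert (0 < INR (fact (S m))) by apply fact_pos'.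
    auto_derive. lra. change (match m with 0%nat => 1 | S _ => INR m + 1 end) with (INR (S m)). change (fact m + m * fact m)%nat with (fact (S m)). unfold Rdiv; ring.
    simpl Ssum. rewrite fact_simpl, mult_INR. 
    assert (0 < INR (fact m)) by apply fact_pos'. assert (0 < INR (S m)) by (apply lt_0_INR; lia).
    field. lra.
Qed.

Lemma Ssum_0 m : Ssum (S m) 0 = 1.
Proof. induction m as [|m IH]. simpl. field. 
  change (Ssum (S (S m)) 0) with (Ssum (S m) 0 + 0 ^ (S m) / INR (fact (S m))).
  rewrite IH. change (0 ^ S m) with (0 * 0 ^ m). rewrite Rmult_0_l. unfold Rdiv; ring. Qed.

Lemma Ssum_rec m x : Ssum (S m) x = Ssum m x + x ^ m / INR (fact m).
Proof. reflexivity. Qed.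

Lemma is_derive_expSsum m (x : R) :
  is_derive (fun t => exp (- t) * Ssum (S m) t) x (- (exp (- x) * x ^ m / INR (fact m))).
Proof.
  assert (H1 : derivable_pt_lim (fun t => exp (- t)) x (- exp (- x))).
  { apply is_derive_Reals. auto_derive. auto. ring. }
  assert (H2 : derivable_pt_lim (Ssum (S m)) x (Ssum m x)).
  { apply is_derive_Reals. apply is_derive_Ssum. }
  apply is_derive_Reals.
  replace (- (exp (- x) * x ^ m / INR (fact m))) with
    (- exp (- x) * Ssum (S m) x + exp (- x) * Ssum m x).
  apply (derivable_pt_lim_mult (fun t => exp (- t)) (Ssum (S m)) x _ _ H1 H2).
  rewrite Ssum_rec. unfold Rdiv. ring.
Qed.

Lemma tail_bound m lam : 0 < lam < INR (S m) ->
  1 - exp (- lam) * Ssum (S m) lam <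
  exp (- lam) * lam ^ (S m) / (INR (fact m) * (INR (S m) - lam)).
Proof.
  intros Hl. set (N := INR (S m)) in *.
  assert (Hf : 0 < INR (fact m)) by apply fact_pos'.
  set (f := fun x => exp (- x) * x ^ (S m) / (INR (fact m) * (N - x)) - 1
                     + exp (- x) * Ssum (S m) x).
  assert (Hm : f 0 < f lam).
  { apply (mono_lt f (fun x => exp (- x) * x ^ (S m) / (INR (fact m) * (N - x) ^ 2))).
    - lra.
    - intros x Hx. unfold f.
      assert (HA : is_derive (fun x => exp (- x) * x ^ (S m) / (INR (fact m) * (N - x))) x
         (exp (- x) * x ^ m / INR (fact m) * (1 + x / (N - x) ^ 2))).
      { auto_derive. apply Rgt_not_eq, Rmult_lt_0_compat; lra.
        change (match m with 0%nat => 1 | S _ => INR m + 1 end) with N. field. split; lra. }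
      assert (HB := is_derive_expSsum m x).
      apply is_derive_Reals.
      replace (exp (- x) * x ^ S m / (INR (fact m) * (N - x) ^ 2)) with
        (exp (- x) * x ^ m / INR (fact m) * (1 + x / (N - x) ^ 2) - 0 +
         (- (exp (- x) * x ^ m / INR (fact m)))).
      apply derivable_pt_lim_plus. apply derivable_pt_lim_minus.
      apply is_derive_Reals; exact HA. apply derivable_pt_lim_const.
      apply is_derive_Reals; exact HB.
      simpl pow. field. lra.
    - intros x Hx. apply Rdiv_lt_0_compat. apply Rmult_lt_0_compat. apply exp_pos.
      apply pow_lt; lra. apply Rmult_lt_0_compat. lra. apply pow_lt; lra. }
  assert (H0 : f 0 = 0).
  { unfold f. rewrite Ropp_0, exp_0, Ssum_0. simpl pow. unfold Rdiv. ring. }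
  rewrite H0 in Hm. unfold f in Hm. lra.
Qed.

Lemma exp_le_mono x y : x <= y -> exp x <= exp y.
Proof. intros [H|H]. left; apply exp_increasing; auto. subst; lra. Qed.

Lemma pow_exp_ln x n : 0 < x -> x ^ n = exp (INR n * ln x).
Proof. intros Hx. rewrite <- ln_pow by auto. rewrite exp_ln; auto. apply pow_lt; auto. Qed.

Lemma phi_nonneg y : 0 < y <= 1 -> 0 <= 1 / y - y + 2 * ln y.
Proof.
  intros Hy.
  assert (H : (fun t => - (1 / t - t + 2 * ln t)) y <= (fun t => - (1 / t - t + 2 * ln t)) 1).
  { apply (mono_le (fun t => - (1 / t - t + 2 * ln t)) (fun t => (1 - 1 / t) ^ 2) y 1). lra.
    - intros x Hx. auto_derive. repeat split; lra. field. lra.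
    - intros x Hx. apply pow2_ge_0. }
  simpl in H. rewrite ln_1 in H. lra.
Qed.

Lemma key_pt (N s : R) (n : nat) : N = INR n -> 0 < s <= N ->
  exp (- (N * N / s)) * (N * N / s) ^ n <= exp (- s) * s ^ n.
Proof.
  intros HN Hs. set (y := s / N).
  assert (HN0 : 0 < N) by lra.
  assert (Hy : 0 < y <= 1).
  { unfold y. split. apply Rdiv_lt_0_compat; lra. apply Rmult_le_reg_r with N. lra.
    unfold Rdiv. rewrite Rmult_assoc, Rinv_l by lra. lra. }
  assert (Hs' : s = N * y) by (unfold y; field; lra).
  assert (HNs : N * N / s = N / y) by (rewrite Hs'; field; lra).
  rewrite HNs, Hs'.
  assert (Hq : 0 < N / y) by (apply Rdiv_lt_0_compat; lra).
  rewrite (pow_exp_ln (N / y)) by auto. rewrite (pow_exp_ln (N * y)) by nra.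
  rewrite <- !exp_plus. apply exp_le_mono.
  unfold Rdiv. rewrite ln_mult, ln_Rinv, ln_mult by (try apply Rinv_0_lt_compat; lra).
  rewrite <- HN. pose proof (phi_nonneg y Hy).
  assert (E : - (N * y) + N * (ln N + ln y) - (- (N * / y) + N * (ln N + - ln y))
              = N * (1 / y - y + 2 * ln y)) by (field; lra).
  assert (0 <= N * (1 / y - y + 2 * ln y)) by (apply Rmult_le_pos; lra).
  lra.
Qed.

Lemma Ssum_le j M : 1 <= M -> Ssum j M <= INR j * M ^ j.
Proof.
  intros HM. induction j as [|j IH]. simpl; lra.
  rewrite Ssum_rec, S_INR.
  assert (H1 : M ^ j <= M ^ (S j)) by (simpl; assert (0 <= M^j) by (apply pow_le; lra); nra).
  assert (H2 : M ^ j / INR (fact j) <= M ^ j).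
  { unfold Rdiv. assert (0 <= M^j) by (apply pow_le; lra).
    assert (1 <= INR (fact j)). { change 1 with (INR 1). apply le_INR. pose proof (lt_O_fact j); lia. }
    assert (0 < / INR (fact j) <= 1). { split. apply Rinv_0_lt_compat; lra.
      rewrite <- Rinv_1. apply Rinv_le_contravar; lra. }
    nra. }
  assert (0 <= INR j) by apply pos_INR. nra.
Qed.

Lemma tail_small n M : 1 <= M ->
  exp (- M) * Ssum n M <= INR n * (INR n + 1) ^ (S n) / M.
Proof.
  intros HM. set (N := INR n).
  assert (HN : 0 <= N) by apply pos_INR.
  set (t := M / (N + 1)).
  assert (Ht : 0 < t) by (unfold t; apply Rdiv_lt_0_compat; lra).
  assert (HeM : exp M = exp t ^ (S n)).
  { rewrite <- exp_mult_INR. f_equal. unfold t. rewrite S_INR. fold N. field. lra. }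
  assert (Het : t <= exp t) by (pose proof (exp_ineq1 t); lra).
  assert (Hp : t ^ (S n) <= exp M) by (rewrite HeM; apply pow_incr; lra).
  assert (Htp : t ^ (S n) * (N + 1) ^ (S n) = M ^ (S n)).
  { rewrite <- Rpow_mult_distr. f_equal. unfold t. field. lra. }
  assert (HS := Ssum_le n M HM). fold N in HS.
  assert (Htn : 0 < t ^ (S n)) by (apply pow_lt; lra).
  assert (HMn : 0 < M ^ n) by (apply pow_lt; lra).
  assert (HN1 : 0 < (N + 1) ^ (S n)) by (apply pow_lt; lra).
  rewrite exp_Ropp.
  assert (Hexp : 0 < exp M) by apply exp_pos.
  apply Rle_trans with (/ exp M * (N * M ^ n)).
  { apply Rmult_le_compat_l. left; apply Rinv_0_lt_compat; lra. exact HS. }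
  apply Rle_trans with (/ t ^ (S n) * (N * M ^ n)).
  { apply Rmult_le_compat_r. apply Rmult_le_pos; lra. apply Rinv_le_contravar; lra. }
  right. replace (M ^ n) with (M ^ (S n) / M) by (simpl; field; lra).
  rewrite <- Htp. field. lra.
Qed.

Definition Fm (m : nat) (t : R) := - (exp (- t) * Ssum (S m) t).

Lemma is_derive_Fm m (t : R) : derivable_pt_lim (Fm m) t (exp (- t) * t ^ m / INR (fact m)).
Proof.
  unfold Fm. apply is_derive_Reals.
  replace (exp (- t) * t ^ m / INR (fact m)) with (- (- (exp (- t) * t ^ m / INR (fact m)))) by ring.
  apply is_derive_Reals, derivable_pt_lim_opp, is_derive_Reals, is_derive_expSsum.
Qed.

Lemma Fm_ge m s : 0 <= s -> -1 <= Fm m s.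
Proof.
  intros Hs.
  assert (H : Fm m 0 <= Fm m s).
  { apply (mono_le (Fm m) (fun t => exp (- t) * t ^ m / INR (fact m)) 0 s Hs).
    - intros x _. apply is_derive_Reals, is_derive_Fm.
    - intros x Hx. apply Rdiv_le_0_compat. apply Rmult_le_pos. left; apply exp_pos.
      apply pow_le; lra. apply fact_pos'. }
  unfold Fm at 1 in H. rewrite Ropp_0, exp_0, Ssum_0 in H. lra.
Qed.

Lemma D_mono m s : let N := INR (S m) in 0 < s <= N ->
  Fm m s + Fm m (N * N / s) <= Fm m N + Fm m (N * N / N).
Proof.
  intros N Hs. assert (HN : 0 < N) by lra.
  assert (Hf : 0 < INR (fact m)) by apply fact_pos'.
  apply (mono_le (fun s => Fm m s + Fm m (N * N / s))
    (fun s => exp (- s) * s ^ m / INR (fact m) +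
              exp (- (N * N / s)) * (N * N / s) ^ m / INR (fact m) * (- (N * N) / s ^ 2))
    s N). lra.
  - intros x Hx. apply is_derive_Reals. apply derivable_pt_lim_plus. apply is_derive_Fm.
    apply (derivable_pt_lim_comp (fun s => N * N / s) (Fm m)).
    apply is_derive_Reals. auto_derive. lra. field. lra.
    apply is_derive_Fm.
  - intros x Hx.
    assert (K := key_pt N x (S m) eq_refl ltac:(lra)).
    set (u := N * N / x) in *.
    assert (Hu : u ^ m * (N * N / x ^ 2) = u ^ (S m) / x) by (unfold u; simpl; field; lra).
    assert (Hx' : x ^ m = x ^ (S m) / x) by (simpl; field; lra).
    assert (E : exp (- x) * x ^ m / INR (fact m) +
       exp (- u) * u ^ m / INR (fact m) * (- (N * N) / x ^ 2)
       = (exp (- x) * x ^ (S m) - exp (- u) * u ^ (S m)) / (x * INR (fact m))).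
    { assert (Hux : N * N = u * x) by (unfold u; field; lra). rewrite Hux.
      simpl. field. lra. }
    rewrite E. apply Rdiv_le_0_compat. lra. apply Rmult_lt_0_compat; lra.
Qed.

Lemma median m : exp (- INR (S m)) * Ssum (S m) (INR (S m)) <= 1 / 2.
Proof.
  set (N := INR (S m)). set (b := exp (- N) * Ssum (S m) N).
  assert (HN : 1 <= N) by (unfold N; rewrite S_INR; pose proof (pos_INR m); lra).
  assert (Hgen : forall M, N <= M -> 2 * b <= 1 + exp (- M) * Ssum (S m) M).
  { intros M HM. set (s := N * N / M).
    assert (Hs : 0 < s <= N).
    { unfold s. split. apply Rdiv_lt_0_compat; nra.
      apply Rmult_le_reg_r with M. lra. unfold Rdiv. rewrite Rmult_assoc, Rinv_l by lra. nra. }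
    assert (HD := D_mono m s Hs). fold N in HD.
    assert (Hss : N * N / s = M) by (unfold s; field; lra).
    assert (HNN : N * N / N = N) by (field; lra).
    rewrite Hss, HNN in HD.
    assert (Hge := Fm_ge m s ltac:(lra)).
    unfold Fm in HD, Hge. fold b in HD. lra. }
  destruct (Rle_lt_dec b (1/2)) as [H|H]; [exact H|exfalso].
  set (C := N * (N + 1) ^ (S (S m))).
  assert (HC : 0 < C).
  { unfold C. apply Rmult_lt_0_compat. lra. apply pow_lt. lra. }
  set (M := N + 2 * C / (2 * b - 1)).
  assert (HCd : 0 < 2 * C / (2 * b - 1)) by (apply Rdiv_lt_0_compat; lra).
  assert (HM : N <= M) by (unfold M; lra).
  assert (H1 := Hgen M HM).
  assert (H2 := tail_small (S m) M ltac:(lra)). fold N in H2. fold C in H2.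
  assert (H3 : C / M < 2 * b - 1).
  { apply Rmult_lt_reg_r with M. lra. unfold Rdiv. rewrite Rmult_assoc, Rinv_l by lra.
    rewrite Rmult_1_r. unfold M.
    assert (C = (2 * b - 1) * (C / (2 * b - 1))) by (field; lra). nra. }
  lra.
Qed.

Fixpoint Aw (k : nat) (x : R) : R :=
  match k with
  | O => x
  | S O => 1 - cos x
  | S (S j) => (INR (S j) * Aw j x - sin x ^ (S j) * cos x) / INR (S (S j))
  end.

Lemma Aw_deriv_step j (x : R) : derivable_pt_lim (Aw j) x (sin x ^ j) ->
  derivable_pt_lim (Aw (S (S j))) x (sin x ^ (S (S j))).
Proof.
  intros IH.
  assert (Hc : 0 < INR (S (S j))) by (apply lt_0_INR; lia).
  assert (HD : is_derive (fun x => sin x ^ (S j) * cos x) x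
     (INR (S j) * sin x ^ j * cos x ^ 2 - sin x ^ (S (S j)))).
  { auto_derive. auto. change (match j with 0%nat => 1 | S _ => INR j + 1 end) with (INR (S j)).
    simpl. ring. }
  apply is_derive_Reals in HD.
  apply is_derive_Reals. apply is_derive_ext with
    (f := fun x => INR (S j) / INR (S (S j)) * Aw j x - / INR (S (S j)) * (sin x ^ (S j) * cos x)).
  { intros t. match goal with |- ?a = ?b => change (@eq R a b) end. change (Aw (S (S j)) t) with ((INR (S j) * Aw j t - sin t ^ (S j) * cos t) / INR (S (S j))). field. lra. }
  apply is_derive_Reals.
  replace (sin x ^ S (S j)) with
    (INR (S j) / INR (S (S j)) * sin x ^ j - / INR (S (S j)) * (INR (S j) * sin x ^ j * cos x ^ 2 - sin x ^ (S (S j)))).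
  apply derivable_pt_lim_minus; apply derivable_pt_lim_scal; assumption.
  assert (Hsc := sin2_cos2 x). unfold Rsqr in Hsc.
  replace (cos x ^ 2) with (1 - sin x ^ 2) by (simpl; lra).
  assert (Ha : INR (S j) + 1 <> 0) by (rewrite <- S_INR; lra).
  rewrite (S_INR (S j)). set (a := INR (S j)) in *.
  replace (sin x ^ S (S j)) with (sin x ^ j * sin x ^ 2) by (simpl; ring).
  field. exact Ha.
Qed.

Lemma Aw_deriv k (x : R) : derivable_pt_lim (Aw k) x (sin x ^ k).
Proof.
  assert (H : forall k, derivable_pt_lim (Aw k) x (sin x ^ k) /\
                        derivable_pt_lim (Aw (S k)) x (sin x ^ (S k))).
  { induction k0 as [|k0 IH].
    - split.
      + apply is_derive_Reals. change (Aw 0) with (fun x : R => x). auto_derive. auto. simpl. ring.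
      + apply is_derive_Reals. simpl Aw. auto_derive. auto. simpl. ring.
    - destruct IH as [IH1 IH2]. split. exact IH2. apply Aw_deriv_step. exact IH1. }
  apply H.
Qed.

Definition W k := Aw k (PI / 2).

Lemma Aw_0 k : Aw k 0 = 0.
Proof.
  assert (H : forall k, Aw k 0 = 0 /\ Aw (S k) 0 = 0).
  { induction k0 as [|k0 [IH1 IH2]].
    - split. reflexivity. simpl. rewrite cos_0; ring.
    - split. exact IH2.
      change (Aw (S (S k0)) 0) with ((INR (S k0) * Aw k0 0 - sin 0 ^ (S k0) * cos 0) / INR (S (S k0))).
      rewrite IH1, sin_0. simpl. unfold Rdiv. ring. }
  apply H.
Qed.

Lemma W_0 : W 0 = PI / 2.
Proof. reflexivity. Qed.

Lemma W_1 : W 1 = 1.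
Proof. unfold W. simpl. rewrite cos_PI2. ring. Qed.

Lemma W_rec j : W (S (S j)) = INR (S j) / INR (S (S j)) * W j.
Proof.
  unfold W. change (Aw (S (S j)) (PI/2)) with
    ((INR (S j) * Aw j (PI/2) - sin (PI/2) ^ (S j) * cos (PI/2)) / INR (S (S j))).
  rewrite cos_PI2. unfold Rdiv. ring.
Qed.

Lemma W_mono k : W (S k) <= W k.
Proof.
  assert (H : (fun x => Aw k x - Aw (S k) x) 0 <= (fun x => Aw k x - Aw (S k) x) (PI / 2)).
  { apply (mono_le (fun x => Aw k x - Aw (S k) x) (fun x => sin x ^ k - sin x ^ (S k)) 0 (PI/2)).
    - pose proof PI_RGT_0. lra.
    - intros x _. apply is_derive_Reals. apply derivable_pt_lim_minus; apply Aw_deriv.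
    - intros x Hx. assert (0 <= sin x) by (apply sin_ge_0; pose proof PI_RGT_0; lra).
      assert (sin x <= 1) by apply SIN_bound.
      assert (0 <= sin x ^ k) by (apply pow_le; lra).
      simpl. nra. }
  cbv beta in H. rewrite !Aw_0 in H. unfold W. lra.
Qed.

Lemma INR_2n n : INR (2 * n) = 2 * INR n.
Proof. rewrite mult_INR. reflexivity. Qed.

Lemma W_even n : W (2 * n) * (4 ^ n * INR (fact n) ^ 2) = PI / 2 * INR (fact (2 * n)).
Proof.
  induction n as [|n IH].
  - simpl. unfold W. simpl. field.
  - replace (2 * S n)%nat with (S (S (2 * n))) by lia.
    rewrite W_rec. rewrite !fact_simpl, !mult_INR.
    rewrite !S_INR, INR_2n.
    assert (Hn : 0 <= INR n) by apply pos_INR.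
    set (w := W (2 * n)) in *. set (a := INR (fact n)) in *. set (b := INR (fact (2*n))) in *.
    replace (4 ^ S n) with (4 * 4 ^ n) by reflexivity.
    replace (PI / 2 * ((2 * INR n + 1 + 1) * ((2 * INR n + 1) * b))) with
      ((2 * INR n + 1 + 1) * (2 * INR n + 1) * (w * (4 ^ n * a ^ 2))) by (rewrite IH; ring).
    field. lra.
Qed.

Lemma W_odd n : W (S (2 * n)) * INR (fact (S (2 * n))) = 4 ^ n * INR (fact n) ^ 2.
Proof.
  induction n as [|n IH].
  - simpl. rewrite W_1. simpl. ring.
  - replace (S (2 * S n)) with (S (S (S (2 * n)))) by lia.
    rewrite W_rec. 
    rewrite (fact_simpl (S (S (2 * n)))), (fact_simpl (S (2 * n))), (fact_simpl n).
    rewrite !mult_INR.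
    set (w := W (S (2 * n))) in *. set (c := INR (fact (S (2 * n)))) in *.
    set (a := INR (fact n)) in *.
    rewrite !S_INR, INR_2n in *. 
    assert (Hn : 0 <= INR n) by apply pos_INR.
    replace (4 ^ S n) with (4 * 4 ^ n) by reflexivity.
    replace (4 * 4 ^ n * ((INR n + 1) * a) ^ 2) with (4 * (INR n + 1) ^ 2 * (4 ^ n * a ^ 2)) by ring.
    rewrite <- IH. field. lra.
Qed.

Lemma wallis m : PI * INR (S m) * INR (fact (2 * S m)) ^ 2 <= 16 ^ (S m) * INR (fact (S m)) ^ 4.
Proof.
  assert (Hm := W_mono (S (2 * m))).
  replace (S (S (2 * m))) with (2 * S m)%nat in Hm by lia.
  assert (He := W_even (S m)). assert (Ho := W_odd m).
  replace (fact (2 * S m)) with (fact (S (S (2 * m)))) in * by (f_equal; lia).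
  rewrite (fact_simpl (S (2 * m))) in *. rewrite (fact_simpl m) in *.
  rewrite !mult_INR in *. rewrite !S_INR, INR_2n in *.
  set (W2 := W (2 * S m)) in *. set (W1 := W (S (2 * m))) in *.
  set (G1 := INR (fact (S (2 * m)))) in *. set (F0 := INR (fact m)) in *.
  assert (H16 : 16 ^ S m = 4 ^ S m * 4 ^ S m) by (rewrite <- Rpow_mult_distr; f_equal; ring).
  rewrite H16. replace (4 ^ S m) with (4 * 4 ^ m) in * by reflexivity.
  set (P := 4 ^ m) in *.
  assert (HP : 0 < P) by (apply pow_lt; lra).
  assert (HG : 0 < G1) by apply fact_pos'.
  assert (HF : 0 < F0) by apply fact_pos'.
  assert (Hn : 0 <= INR m) by apply pos_INR.
  assert (HPI : PI * ((2 * INR m + 1 + 1) * G1) = 2 * W2 * (4 * P * ((INR m + 1) * F0) ^ 2)) by lra.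
  assert (Hk : 0 <= (INR m + 1) * ((2 * INR m + 1 + 1) * G1) * (4 * P * ((INR m + 1) * F0) ^ 2)).
  { apply Rmult_le_pos. apply Rmult_le_pos; nra. apply Rmult_le_pos. lra. apply pow2_ge_0. }
  assert (Eq : PI * (INR m + 1) * ((2 * INR m + 1 + 1) * G1) ^ 2 =
     (INR m + 1) * ((2 * INR m + 1 + 1) * G1) * (PI * ((2 * INR m + 1 + 1) * G1))) by ring.
  rewrite Eq, HPI.
  replace ((INR m + 1) * ((2 * INR m + 1 + 1) * G1) * (2 * W2 * (4 * P * ((INR m + 1) * F0) ^ 2))) with
    (2 * W2 * ((INR m + 1) * ((2 * INR m + 1 + 1) * G1) * (4 * P * ((INR m + 1) * F0) ^ 2))) by ring.
  apply Rle_trans with (2 * W1 * ((INR m + 1) * ((2 * INR m + 1 + 1) * G1) * (4 * P * ((INR m + 1) * F0) ^ 2))).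
  nra.
  right. replace (2 * W1 * ((INR m + 1) * ((2 * INR m + 1 + 1) * G1) * (4 * P * ((INR m + 1) * F0) ^ 2)))
    with (2 * (W1 * G1) * ((INR m + 1) * (2 * INR m + 1 + 1)) * (4 * P * ((INR m + 1) * F0) ^ 2)) by ring.
  rewrite Ho. ring.
Qed.

Lemma ln_upper y : 0 <= y -> ln (1 + y) <= y - y ^ 2 / 2 + y ^ 3 / 3.
Proof.
  intros Hy.
  assert (H : (fun t => t - t ^ 2 / 2 + t ^ 3 / 3 - ln (1 + t)) 0 <=
              (fun t => t - t ^ 2 / 2 + t ^ 3 / 3 - ln (1 + t)) y).
  { apply (mono_le (fun t => t - t ^ 2 / 2 + t ^ 3 / 3 - ln (1 + t))
      (fun t => t ^ 3 / (1 + t)) 0 y Hy).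
    - intros x Hx. auto_derive. repeat split; lra. field. lra.
    - intros x Hx. apply Rdiv_le_0_compat. apply pow_le; lra. lra. }
  cbv beta in H. rewrite Rplus_0_r, ln_1 in H. lra.
Qed.

Definition sig (n : nat) : R := (INR (fact n) * exp (INR n)) ^ 2 / INR n ^ (2 * n + 1).

Lemma sig_step n : (1 <= n)%nat ->
  sig n * exp (- (1 / INR n)) <= sig (S n) * exp (- (1 / INR (S n))).
Proof.
  intros Hn. unfold sig.
  assert (HN : 1 <= INR n) by (change 1 with (INR 1); apply le_INR; lia).
  rewrite (fact_simpl n), mult_INR, !S_INR.
  set (N := INR n) in *.
  rewrite exp_plus.
  set (X := INR (fact n) * exp N).
  assert (HX : 0 < X) by (apply Rmult_lt_0_compat; [apply fact_pos'|apply exp_pos]).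
  replace ((N + 1) * INR (fact n) * (exp N * exp 1)) with ((N + 1) * exp 1 * X) by (unfold X; ring).
  replace (2 * S n + 1)%nat with (2 * n + 1 + 2)%nat by lia.
  set (k := (2 * n + 1)%nat). rewrite (pow_add (N + 1) k 2).
  assert (HA : 0 < N ^ k) by (apply pow_lt; lra).
  assert (HB : 0 < (N + 1) ^ k) by (apply pow_lt; lra).
  assert (Hkey : (N + 1) ^ k <= N ^ k * (exp 2 * exp (1 / N) * exp (- (1 / (N + 1))))).
  { assert (E1 : (N + 1) ^ k = N ^ k * (1 + 1 / N) ^ k).
    { rewrite <- Rpow_mult_distr. f_equal. field. lra. }
    rewrite E1. apply Rmult_le_compat_l. lra.
    rewrite (pow_exp_ln (1 + 1/N)) by (assert (0 < 1/N) by (apply Rdiv_lt_0_compat; lra); lra).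
    rewrite <- !exp_plus. apply exp_le_mono.
    assert (Hl := ln_upper (1 / N) ltac:(left; apply Rdiv_lt_0_compat; lra)).
    assert (Hk : INR k = 2 * N + 1) by (unfold k; rewrite plus_INR, mult_INR; simpl; unfold N; ring).
    rewrite Hk.
    apply Rle_trans with ((2 * N + 1) * (1 / N - (1 / N) ^ 2 / 2 + (1 / N) ^ 3 / 3)).
    apply Rmult_le_compat_l; lra.
    assert (Hp : (2 * N + 1) * (1 / N - (1 / N) ^ 2 / 2 + (1 / N) ^ 3 / 3) = 2 + 1 / (6 * N ^ 2) + 1 / (3 * N ^ 3))
      by (field; lra).
    rewrite Hp.
    assert (Hq : 2 + 1 / N + - (1 / (N + 1)) = 2 + 1 / (N * (N + 1))) by (field; lra).
    rewrite Hq.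
    assert (1 / (6 * N ^ 2) + 1 / (3 * N ^ 3) <= 1 / (N * (N + 1))).
    { assert (E : 1 / (N * (N + 1)) - (1 / (6 * N ^ 2) + 1 / (3 * N ^ 3)) = (5 * N + 2) * (N - 1) / (6 * N ^ 3 * (N + 1)))
        by (field; lra).
      assert (0 <= (5 * N + 2) * (N - 1) / (6 * N ^ 3 * (N + 1))).
      { apply Rdiv_le_0_compat. nra. apply Rmult_lt_0_compat. apply Rmult_lt_0_compat. lra. apply pow_lt; lra. lra. }
      lra. }
    lra. }
  assert (He : exp (- (1 / N)) * exp (1 / N) = 1) by (rewrite <- exp_plus; replace (- (1/N) + 1/N) with 0 by ring; apply exp_0).
  assert (He2 : exp 2 = exp 1 ^ 2) by (rewrite <- exp_mult_INR; f_equal; simpl; ring).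
  assert (Hen : 0 < exp (- (1 / N))) by apply exp_pos.
  assert (Hen2 : 0 < exp (- (1 / (N + 1)))) by apply exp_pos.
  replace (((N + 1) * exp 1 * X) ^ 2 / ((N + 1) ^ k * (N + 1) ^ 2) * exp (- (1 / (N + 1))))
    with (X ^ 2 * (exp 1 ^ 2 * exp (- (1 / (N + 1)))) / (N + 1) ^ k) by (field; lra).
  apply Rmult_le_reg_r with ((N + 1) ^ k * N ^ k). nra.
  replace (X ^ 2 / N ^ k * exp (- (1 / N)) * ((N + 1) ^ k * N ^ k)) with
    (X ^ 2 * exp (- (1 / N)) * (N + 1) ^ k) by (field; lra).
  replace (X ^ 2 * (exp 1 ^ 2 * exp (- (1 / (N + 1)))) / (N + 1) ^ k * ((N + 1) ^ k * N ^ k)) with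
    (X ^ 2 * exp (- (1 / N)) * (N ^ k * (exp 2 * exp (1 / N) * exp (- (1 / (N + 1)))))).
  2: { rewrite He2.
       replace (X ^ 2 * exp (- (1 / N)) * (N ^ k * (exp 1 ^ 2 * exp (1 / N) * exp (- (1 / (N + 1))))))
         with (X ^ 2 * N ^ k * exp 1 ^ 2 * exp (- (1 / (N + 1))) * (exp (- (1 / N)) * exp (1 / N))) by ring.
       rewrite He. field. lra. }
  apply Rmult_le_compat_l. apply Rmult_le_pos. apply pow2_ge_0. lra. exact Hkey.
Qed.

Lemma sig_pos n : (1 <= n)%nat -> 0 < sig n.
Proof.
  intros Hn. unfold sig. apply Rdiv_lt_0_compat.
  apply pow_lt. apply Rmult_lt_0_compat; [apply fact_pos'|apply exp_pos].
  apply pow_lt. apply lt_0_INR; lia.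
Qed.

Lemma sig_ge1 n : (1 <= n)%nat -> 1 <= sig n.
Proof.
  intros Hn.
  assert (H : forall m, exp 1 <= sig (S m) * exp (- (1 / INR (S m)))).
  { induction m as [|m IH].
    - unfold sig. simpl.
      assert (Hee : exp 1 * exp (-1) = 1) by (rewrite <- exp_plus; replace (1 + -1) with 0 by ring; apply exp_0).
      match goal with |- _ <= ?r => replace r with (exp 1 * (exp 1 * exp (-1))) end.
      rewrite Hee; lra.
      replace (- (1 / 1)) with (-1) by field. field.
    - eapply Rle_trans. exact IH. apply sig_step. lia. }
  destruct n as [|m]. lia.
  specialize (H m).
  assert (Hs := sig_pos (S m) ltac:(lia)).
  assert (exp (- (1 / INR (S m))) <= 1).
  { assert (0 < 1 / INR (S m)) by (apply Rdiv_lt_0_compat; [lra|apply lt_0_INR; lia]).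
    assert (Hx := exp_le_mono (- (1 / INR (S m))) 0 ltac:(lra)). rewrite exp_0 in Hx. exact Hx. }
  assert (1 <= exp 1) by (assert (Hx := exp_le_mono 0 1 ltac:(lra)); rewrite exp_0 in Hx; exact Hx).
  nra.
Qed.

Lemma sig_double n : (1 <= n)%nat -> sig (2 * n) * (2 * PI) <= sig n ^ 2.
Proof.
  intros Hn. destruct n as [|m]. lia.
  assert (W := wallis m).
  unfold sig.
  rewrite INR_2n.
  set (N := INR (S m)) in *.
  assert (HN : 1 <= N) by (unfold N; rewrite S_INR; pose proof (pos_INR m); lra).
  set (G := INR (fact (2 * S m))) in *. set (F := INR (fact (S m))) in *.
  assert (HG : 0 < G) by apply fact_pos'. assert (HF : 0 < F) by apply fact_pos'.
  assert (He : exp (2 * N) = exp N ^ 2) by (rewrite <- exp_mult_INR; f_equal).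
  rewrite He.
  set (E := exp N). assert (HE : 0 < E) by apply exp_pos.
  replace (2 * (2 * S m) + 1)%nat with (4 * S m + 1)%nat by lia.
  replace (2 * S m + 1)%nat with (S (2 * S m)) by lia.
  rewrite (Rpow_mult_distr 2 N).
  assert (H2 : 2 ^ (4 * S m + 1) = 2 * 16 ^ S m).
  { rewrite pow_add, pow_mult. replace (2 ^ 4) with 16 by ring. ring. }
  assert (HN4 : N ^ (4 * S m + 1) = (N ^ (S (2 * S m))) ^ 2 / N).
  { rewrite <- pow_mult. replace (S (2 * S m) * 2)%nat with (4 * S m + 1 + 1)%nat by lia.
    rewrite (pow_add N (4 * S m + 1) 1). field. lra. }
  rewrite H2, HN4.
  set (Q := N ^ S (2 * S m)). assert (HQ : 0 < Q) by (apply pow_lt; lra).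
  assert (H16 : 0 < 16 ^ S m) by (apply pow_lt; lra).
  assert (HPI := PI_RGT_0).
  replace ((G * E ^ 2) ^ 2 / (2 * 16 ^ S m * (Q ^ 2 / N)) * (2 * PI)) with
    (E ^ 4 / Q ^ 2 * (PI * N * G ^ 2 / 16 ^ S m)) by (field; repeat split; lra).
  replace (((F * E) ^ 2 / Q) ^ 2) with (E ^ 4 / Q ^ 2 * F ^ 4) by (field; lra).
  apply Rmult_le_compat_l. apply Rdiv_le_0_compat. apply pow_le; lra. apply pow_lt; lra.
  apply Rmult_le_reg_r with (16 ^ S m). lra.
  unfold Rdiv. rewrite Rmult_assoc, Rinv_l by lra. rewrite Rmult_1_r. lra.
Qed.

Lemma sig_ge n : (1 <= n)%nat -> 2 * PI <= sig n.
Proof.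
  intros Hn. set (K := 2 * PI). assert (HK : 0 < K) by (unfold K; pose proof PI_RGT_0; lra).
  destruct (Rle_lt_dec K (sig n)) as [H|H]; [exact H|exfalso].
  set (rho := sig n / K).
  assert (Hs1 := sig_ge1 n Hn).
  assert (Hr : 0 < rho < 1).
  { unfold rho. split. apply Rdiv_lt_0_compat; lra.
    apply Rmult_lt_reg_r with K. lra. unfold Rdiv. rewrite Rmult_assoc, Rinv_l by lra. lra. }
  assert (Hpow : forall k, (1 <= 2 ^ k * n)%nat /\ sig (2 ^ k * n) <= K * rho ^ (2 ^ k)).
  { induction k as [|k [IH1 IH2]].
    - simpl. split. lia. replace (n + 0)%nat with n by lia. unfold rho. right. field. lra.
    - split. simpl. lia.
      replace (2 ^ S k * n)%nat with (2 * (2 ^ k * n))%nat by (simpl; lia).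
      assert (Hd := sig_double (2 ^ k * n) IH1).
      assert (Hp := sig_pos (2 ^ k * n) IH1).
      apply Rmult_le_reg_r with K. lra.
      replace (K * rho ^ 2 ^ S k * K) with ((K * rho ^ 2 ^ k) ^ 2).
      2: { simpl Nat.pow. rewrite Nat.add_0_r, pow_add. ring. }
      eapply Rle_trans. unfold K in *. exact Hd. apply pow_incr. lra. }
  destruct (pow_lt_1_zero rho ltac:(rewrite Rabs_right; lra) (/ K) ltac:(apply Rinv_0_lt_compat; lra))
    as [N HN].
  assert (HNk : (N <= 2 ^ N)%nat) by (pose proof (Nat.pow_gt_lin_r 2 N ltac:(lia)); lia).
  specialize (HN _ HNk). rewrite Rabs_right in HN by (left; apply pow_lt; lra).
  destruct (Hpow N) as [H1 H2].
  assert (H3 := sig_ge1 _ H1).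
  assert (K * rho ^ 2 ^ N < 1).
  { apply Rmult_lt_reg_l with (/ K). apply Rinv_0_lt_compat; lra.
    rewrite <- Rmult_assoc, Rinv_l by lra. lra. }
  lra.
Qed.

Lemma stirling n : (1 <= n)%nat ->
  exp (- INR n) * INR n ^ n / INR (fact n) <= 1 / sqrt (2 * PI * INR n).
Proof.
  intros Hn. assert (Hs := sig_ge n Hn). unfold sig in Hs.
  set (N := INR n) in *. assert (HN : 1 <= N) by (unfold N; change 1 with (INR 1); apply le_INR; lia).
  set (F := INR (fact n)) in *. assert (HF : 0 < F) by apply fact_pos'.
  assert (HPI := PI_RGT_0).
  set (a := exp (- N) * N ^ n / F).
  assert (Ha : 0 < a).
  { unfold a. apply Rdiv_lt_0_compat; [apply Rmult_lt_0_compat; [apply exp_pos|apply pow_lt; lra]|lra]. }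
  assert (HeN : exp (- N) * exp N = 1) by (rewrite <- exp_plus; replace (- N + N) with 0 by ring; apply exp_0).
  assert (Hpn : N ^ (2 * n + 1) = (N ^ n) ^ 2 * N).
  { rewrite pow_add, <- pow_mult. replace (n * 2)%nat with (2 * n)%nat by lia. simpl. ring. }
  rewrite Hpn in Hs.
  assert (HNn : 0 < N ^ n) by (apply pow_lt; lra).
  assert (Ha2 : a ^ 2 * (2 * PI * N) <= 1).
  { assert (E : a ^ 2 * (2 * PI * N) = 2 * PI * ((N ^ n) ^ 2 * N) / (F * exp N) ^ 2 * (exp (- N) * exp N) ^ 2).
    { unfold a. field. repeat split; try lra; apply Rgt_not_eq, exp_pos. }
    rewrite E, HeN.
    assert (0 < (F * exp N) ^ 2) by (apply pow_lt, Rmult_lt_0_compat; [lra|apply exp_pos]).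
    apply Rmult_le_reg_r with ((F * exp N) ^ 2). lra.
    replace (2 * PI * ((N ^ n) ^ 2 * N) / (F * exp N) ^ 2 * 1 ^ 2 * (F * exp N) ^ 2) with
      (2 * PI * ((N ^ n) ^ 2 * N)) by (field; repeat split; try lra; apply Rgt_not_eq, exp_pos).
    apply Rmult_le_reg_r with (/ ((N ^ n) ^ 2 * N)). apply Rinv_0_lt_compat. apply Rmult_lt_0_compat. apply pow_lt; lra. lra.
    replace (2 * PI * ((N ^ n) ^ 2 * N) * / ((N ^ n) ^ 2 * N)) with (2 * PI) by (field; lra).
    replace (1 * (F * exp N) ^ 2 * / ((N ^ n) ^ 2 * N)) with ((F * exp N) ^ 2 / ((N ^ n) ^ 2 * N)) by (field; lra).
    exact Hs. }
  assert (Hx : 0 < 2 * PI * N) by nra.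
  replace a with (sqrt (a ^ 2)) by (apply sqrt_pow2; lra).
  replace (1 / sqrt (2 * PI * N)) with (sqrt (/ (2 * PI * N))).
  2: { rewrite sqrt_inv. unfold Rdiv. ring. }
  apply sqrt_le_1_alt.
  apply Rmult_le_reg_r with (2 * PI * N). lra. rewrite Rinv_l by lra. exact Ha2.
Qed.

Lemma sum_decomp (Z lam r : R) (z : nat) : Z = INR z -> lam = Z * r ->
  forall j, (j <= z)%nat ->
  sum_f_R0 (fun k => exp (- lam) * lam ^ k / INR (fact k) * (1 - r ^ (z - k))) j =
  exp (- lam) * Ssum (S j) lam - exp (- lam) * r ^ z * Ssum (S j) Z.
Proof.
  intros HZ Hl. induction j as [|j IH]; intros Hj.
  - simpl. rewrite Nat.sub_0_r. field.
  - rewrite tech5. cbv beta. rewrite IH by lia.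
    rewrite (Ssum_rec (S j) lam), (Ssum_rec (S j) Z).
    assert (Hk : lam ^ S j * r ^ (z - S j) = Z ^ S j * r ^ z).
    { rewrite Hl, Rpow_mult_distr, Rmult_assoc, <- pow_add.
      replace (S j + (z - S j))%nat with z by lia. reflexivity. }
    assert (HF : INR (fact (S j)) <> 0) by (apply Rgt_not_eq, fact_pos').
    replace (exp (- lam) * lam ^ S j / INR (fact (S j)) * (1 - r ^ (z - S j))) with
      (exp (- lam) * lam ^ S j / INR (fact (S j)) - exp (- lam) * (lam ^ S j * r ^ (z - S j)) / INR (fact (S j)))
      by (field; exact HF).
    rewrite Hk. field. exact HF.
Qed.

Theorem mainTheorem15 (q : R) (z : nat) :
  0 < q < 1 / 2 -> (1 <= z)%nat ->
  let p := 1 - q in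
  let c := q / p - 1 - ln (q / p) in
  P_SN q z <
    1 / (1 - q / p) * (1 / sqrt (2 * PI * INR z)) * exp (- (c * INR z))
    + 1 / 2 * exp (- (c * INR z)).
Proof.
  intros Hq Hz p c. unfold c, p. clear c p.
  destruct z as [|m]; [lia|].
  set (Z := INR (S m)).
  assert (HZ : 1 <= Z) by (unfold Z; rewrite S_INR; pose proof (pos_INR m); lra).
  set (r := q / (1 - q)).
  assert (Hr : 0 < r < 1).
  { unfold r. split. apply Rdiv_lt_0_compat; lra.
    apply Rmult_lt_reg_r with (1 - q). lra. unfold Rdiv. rewrite Rmult_assoc, Rinv_l by lra. lra. }
  set (lam := Z * r).
  assert (Hlam : 0 < lam < Z) by (unfold lam; split; nra).
  set (E := exp (- lam) * r ^ (S m) * exp Z).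
  assert (HE : exp (- ((r - 1 - ln r) * Z)) = E).
  { unfold E. rewrite (pow_exp_ln r) by lra. fold Z.
    rewrite <- !exp_plus. f_equal. unfold lam. ring. }
  rewrite HE.
  assert (HEpos : 0 < E).
  { unfold E. apply Rmult_lt_0_compat. apply Rmult_lt_0_compat. apply exp_pos. apply pow_lt; lra. apply exp_pos. }
  assert (HP : P_SN q (S m) = (1 - exp (- lam) * Ssum (S m) lam) + E * (exp (- Z) * Ssum (S m) Z)).
  { unfold P_SN. cbv zeta.
    replace (INR (S m) * q / (1 - q)) with lam by (unfold lam, Z, r; field; lra).
    fold r. replace (S m - 1)%nat with m by lia.
    rewrite (sum_decomp Z lam r (S m) eq_refl eq_refl m ltac:(lia)).
    unfold E.
    replace (exp (- lam) * r ^ S m * exp Z * (exp (- Z) * Ssum (S m) Z)) with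
      (exp (- lam) * r ^ S m * Ssum (S m) Z * (exp Z * exp (- Z))) by ring.
    rewrite <- exp_plus. replace (Z + - Z) with 0 by ring. rewrite exp_0. ring. }
  rewrite HP.
  assert (Ht := tail_bound m lam Hlam). fold Z in Ht.
  assert (Hs := stirling (S m) ltac:(lia)). fold Z in Hs.
  assert (Hb := median m). fold Z in Hb.
  set (t := exp (- Z) * Z ^ S m / INR (fact (S m))) in *.
  assert (Htail : exp (- lam) * lam ^ S m / (INR (fact m) * (Z - lam)) = E * t / (1 - r)).
  { unfold E, t, lam. rewrite fact_simpl, mult_INR, Rpow_mult_distr. fold Z.
    assert (0 < INR (fact m)) by apply fact_pos'.
    replace (INR (S m)) with Z by reflexivity.
    replace (exp (- (Z * r)) * r ^ S m * exp Z * (exp (- Z) * Z ^ S m / (Z * INR (fact m))) / (1 - r))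
      with (exp (- (Z * r)) * r ^ S m * Z ^ S m / (Z * INR (fact m) * (1 - r)) * (exp Z * exp (- Z)))
      by (field; repeat split; lra).
    rewrite <- exp_plus. replace (Z + - Z) with 0 by ring. rewrite exp_0.
    field. repeat split; try lra; nra. }
  rewrite Htail in Ht.
  assert (H1 : E * t / (1 - r) <= 1 / (1 - r) * (1 / sqrt (2 * PI * Z)) * E).
  { replace (E * t / (1 - r)) with (1 / (1 - r) * t * E) by (field; lra).
    apply Rmult_le_compat_r. lra. apply Rmult_le_compat_l.
    left; apply Rdiv_lt_0_compat; lra. exact Hs. }
  assert (H2 : E * (exp (- Z) * Ssum (S m) Z) <= 1 / 2 * E) by nra.
  lra.
Qed.
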